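(* Let $p$ be a minimal idempotent in $(\beta\mathbb{N}, +)$, let $\langle C_n \rangle_{n=1}^\infty$ be a sequence of members of $p$, and let $\langle a_n \rangle_{n=1}^\infty$ be a sequence in $\mathbb{N}$. Then for each $n \in \mathbb{N}$ there exists an arithmetic progression $Y_n \subseteq C_n$ of length $a_n$ such that for every nonempty finite $F \subseteq \mathbb{N}$, $\sum_{n \in F} Y_n \subseteq C_{\min F}$.
   Context: $\beta\mathbb{N}$ is the set of ultrafilters on $\mathbb{N}$ with the extension of addition $p+q = \{A \subseteq \mathbb{N} : \{x : -x+A \in q\} \in p\}$, $-x+A=\{y: x+y\in A\}$, a compact right topological semigroup. A minimal idempotent is an idempotent in the smallest two-sided ideal $K(\beta\mathbb{N})$. An arithmetic progression of length $k$ is a set $\{a, a+d, \ldots, a+(k-1)d\}$ with $a,d\in\mathbb{N}$. For finite $F \subseteq \mathbb{N}$ and nonempty sets $Y_n$, $\sum_{n \in F} Y_n = \{\sum_{n \in F} a_n : a_n \in Y_n \text{ for each } n \in F\}$. *)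

(* Defs.v *)
From mathcomp Require Import all_boot.
Set Implicit Arguments. Unset Strict Implicit. Unset Printing Implicit Defensive.

Definition nset := nat -> Prop.
Definition nfam := nset -> Prop.

Definition Npos : nset := fun n => 0 < n.

(* U is an ultrafilter on N = {1,2,...}; we represent it as an ultrafilter on
   nat containing Npos (equivalently, an ultrafilter on the subspace Npos). *)
Definition is_ultrafilter (U : nfam) : Prop :=
  [/\ U Npos,
      ~ U (fun _ => False),
      (forall A B : nset, U A -> (forall x, A x -> B x) -> U B),
      (forall A B : nset, U A -> U B -> U (fun x => A x /\ B x)) &
      (forall A : nset, U A \/ U (fun x => ~ A x))].

Definition betaN (p : nfam) : Prop := is_ultrafilter p.

Definition shiftset (x : nat) (A : nset) : nset := fun y => A (x + y).

Definition uadd (p q : nfam) : nfam :=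
  fun A => p (fun x => q (shiftset x A)).

Definition is_ideal (I : nfam -> Prop) : Prop :=
  [/\ (forall p, I p -> betaN p),
      (exists p, I p),
      (forall p q, betaN p -> I q -> I (uadd p q)) &
      (forall p q, I p -> betaN q -> I (uadd p q))].

Definition in_K (p : nfam) : Prop :=
  forall I, is_ideal I -> I p.

Definition idempotent (p : nfam) : Prop := betaN p /\ uadd p p = p.

Definition minimal_idempotent (p : nfam) : Prop := idempotent p /\ in_K p.

Definition is_AP (Y : nset) (k : nat) : Prop :=
  exists b d, 0 < b /\ 0 < d /\ Y = (fun x => exists2 i, i < k & x = b + i * d).

(* sum_{n in F} Y_n for a finite set F given as a duplicate-free list. *)
Definition sumset (Y : nat -> nset) (F : seq nat) : nset :=
  fun x => exists f : nat -> nat,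
      (forall n, n \in F -> Y n (f n)) /\ x = \sum_(n <- F) f n.

Definition minF (F : seq nat) : nat := foldr minn (head 0 F) F.

(* Main.v *)
Require Import Defs.
From mathcomp Require Import all_boot.
From mathcomp Require Import zify.
From Stdlib Require Import Classical ClassicalEpsilon.
From mathcomp Require Import boolp classical_sets filter.
Set Implicit Arguments. Unset Strict Implicit. Unset Printing Implicit Defensive.

Definition mono (T : Type) (c : nat -> T) (a d k : nat) :=
  forall i, i < k -> c (a + i * d) = c a.

Definition vdW (k : nat) := forall T : finType, exists N, forall c : nat -> T,
  exists a d, 0 < d /\ a + k * d <= N /\ mono c a d k.

Definition fclaim (k : nat) (T : finType) (s N : nat) :=
 forall c : nat -> T,
 (exists a d, 0 < d /\ a + k.+1 * d <= N /\ mono c a d k.+1) \/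
 (exists f (A D : nat -> nat), f < N /\ forall j, j < s ->
    [/\ 0 < D j, A j + k * D j = f, mono c (A j) (D j) k &
        forall j', j' < s -> c (A j) = c (A j') -> j = j']).

Lemma fclaim_mono k T s N N' : N <= N' -> fclaim k T s N -> fclaim k T s N'.
Proof.
move=> le H c; case: (H c) => [[a [d [d0 [b m]]]]|[f [A [D [fN HA]]]]].
- by left; exists a, d; split=> //; split=> //; apply: leq_trans le.
- by right; exists f, A, D; split=> //; apply: leq_trans le.
Qed.

Lemma fclaim_ex k : 0 < k -> vdW k -> forall (T : finType) s, exists N, fclaim k T s N.
Proof.
move=> k0 Hk T; elim=> [|s IH].
  by exists 1 => c; right; exists 0, (fun _ => 0), (fun _ => 0); split.
case: IH => N0 HN0.
set M := N0.+1.
have HM : fclaim k T s M by apply: fclaim_mono HN0; rewrite /M leqnSn.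
have M0 : 0 < M by [].
case: (Hk {ffun 'I_M -> T}) => L HL.
exists (M * (L + 2)) => c.
pose pat := fun m : nat => [ffun o : 'I_M => c (m * M + o)].
case: (HL pat) => m0 [Db [Db0 [HmL Hpat]]].
have key : forall i o, i < k -> o < M -> c ((m0 + i * Db) * M + o) = c (m0 * M + o).
  move=> i o ik oM.
  have H := congr1 (fun g : {ffun 'I_M -> T} => g (Ordinal oM)) (Hpat i ik).
  by move: H; rewrite /pat /= !ffunE.
have HmL' : m0 <= L by apply: leq_trans HmL; apply: leq_addr.
have bnd : m0 * M + 2 * M <= M * (L + 2) by nia.
have bnd2 : (m0 + k * Db) * M <= L * M by rewrite leq_mul2r HmL orbT.
case: (HM (fun x => c (m0 * M + x))) => [[a [d [d0 [ad Hm]]]]|[f [A [D [fM HA]]]]].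
- left; exists (m0 * M + a), d; split=> //; split; first by lia.
  by move=> i ik; have := Hm i ik; rewrite /= addnA.
- case: (Classical_Prop.classic (exists j, j < s /\ c (m0 * M + f) = c (m0 * M + A j))) => [[j [js Hj]]|Hno].
  + case: (HA j js) => Dj0 Af Hmj _.
    left; exists (m0 * M + A j), (D j); split=> //; split.
      have : D j <= k * D j by rewrite leq_pmull.
      lia.
    move=> i; rewrite ltnS leq_eqVlt => /orP [/eqP ->|ik].
      by rewrite -addnA Af Hj.
    by have := Hmj i ik; rewrite /= addnA.
  + right.
    exists (m0 * M + f + k * (M * Db)).
    exists (fun j => if j < s then m0 * M + A j else m0 * M + f).
    exists (fun j => if j < s then D j + M * Db else M * Db).
    split; first by lia.
    move=> j; rewrite ltnS => js.
    have [jls|jge] := ltnP j s.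
    * rewrite /mono /=; case: (HA j jls) => Dj0 Af Hmj Hinj.
      split.
      - by rewrite addn_gt0 Dj0.
      - lia.
      - move=> i ik.
        have Ai : A j + i * D j < M.
          have : i * D j <= k * D j by rewrite leq_mul2r ltnW ?orbT.
          lia.
        transitivity (c ((m0 + i*Db)*M + (A j + i * D j))); first by congr c; lia.
        rewrite key //; have := Hmj i ik; by rewrite /= addnA.
      - move=> j'; rewrite ltnS => j's.
        have [j'ls|j'ge] := ltnP j' s; first by move/Hinj; apply.
        move=> h; exfalso; apply: Hno; exists j; split=> //; by rewrite h.
    * have -> : j = s by apply/eqP; rewrite eqn_leq js jge.
      rewrite /mono /=; split.
      - by rewrite muln_gt0 M0.
      - lia.
      - move=> i ik; transitivity (c ((m0 + i*Db)*M + f)); first by congr c; lia.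
        by rewrite key.
      - move=> j'; rewrite ltnS => j's.
        have [j'ls|j'ge] := ltnP j' s; last by move=> _; apply/eqP; rewrite eqn_leq j's j'ge.
        move=> h; exfalso; apply: Hno; exists j'; split=> //.
Qed.

Lemma vdW_all k : 0 < k -> vdW k.
Proof.
elim: k => [//|k IH] _.
case: k IH => [_|k IH].
- move=> T; exists 1 => c; exists 0, 1; split=> //; split=> // i.
  by rewrite ltnS leqn0 => /eqP ->.
- have Hk := IH isT; move=> T.
  case: (@fclaim_ex k.+1 isT Hk T (#|T|.+1)) => N HN.
  exists N => c; case: (HN c) => [//|[f [A [D [_ HA]]]]].
  exfalso.
  pose g := fun j : 'I_(#|T|.+1) => c (A j).
  have ginj : injective g.
    move=> j1 j2 h; apply: val_inj; case: (HA j1 (ltn_ord j1)) => _ _ _ Hi.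
    exact: (Hi j2 (ltn_ord j2) h).
  by have := leq_card g ginj; rewrite card_ord ltnn.
Qed.

Definition ap (A : nset) k := exists b d, 0 < b /\ 0 < d /\ forall i, i < k -> A (b + i * d).
Definition rich (A : nset) := forall k, ap A k.

Lemma ap_le A k k' : k' <= k -> ap A k -> ap A k'.
Proof.
move=> le [b [d [b0 [d0 H]]]]; exists b, d; do 2 split=> //.
move=> i ik; apply: H; exact: leq_trans ik le.
Qed.

Lemma rich_sub (A B : nset) : (forall x, A x -> B x) -> rich A -> rich B.
Proof.
move=> AB H k; have [b [d [b0 [d0 Hb]]]] := H k.
by exists b, d; do 2 split=> //; move=> i ik; apply: AB; apply: Hb.
Qed.

Lemma rich_union (A B : nset) : rich (fun x => A x \/ B x) -> rich A \/ rich B.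
Proof.
move=> H; apply: NNPP => /not_or_and [nA nB].
have [k1 h1] := not_all_ex_not _ _ nA.
have [k2 h2] := not_all_ex_not _ _ nB.
pose k := (maxn k1 k2).+1.
have [N HN] := @vdW_all k isT bool.
have [b [d [b0 [d0 Hbd]]]] := H N.+1.
pose c := fun i => `[< A (b + i * d) >].
have [a [e [e0 [ae Hm]]]] := HN c.
have Hin : forall i, i < k -> (A (b + (a + i*e)*d) \/ B (b + (a + i*e)*d)).
  move=> i ik; apply: Hbd.
  have : i * e <= k * e by rewrite leq_mul2r ltnW ?orbT.
  lia.
have k1k : k1 <= k by rewrite /k ltnW // ltnS leq_maxl.
have k2k : k2 <= k by rewrite /k ltnW // ltnS leq_maxr.
have pos1 : 0 < b + a * d by rewrite addn_gt0 b0.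
have pos2 : 0 < e * d by rewrite muln_gt0 e0 d0.
case Ec: (c a).
- apply: h1; apply: (@ap_le A k) => //; exists (b + a*d), (e*d); do 2 split=> //.
  move=> i ik; have := Hm i ik; rewrite Ec /c => /asboolP.
  by have -> : b + a*d + i*(e*d) = b + (a + i*e)*d by lia.
- apply: h2; apply: (@ap_le B k) => //; exists (b + a*d), (e*d); do 2 split=> //.
  move=> i ik; have := Hm i ik; rewrite Ec /c => /asboolP nAi.
  have -> : b + a*d + i*(e*d) = b + (a + i*e)*d by lia.
  by case: (Hin i ik).
Qed.

Definition F0 : set_system nat := fun A => ~ rich (fun x => 0 < x /\ ~ A x).

Lemma F0_proper : ProperFilter F0.
Proof.
constructor.
- rewrite /F0 => H; apply: H => k; exists 1, 1; do 2 split=> //.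
  by move=> i _; split=> //; move=> [].
- constructor.
  + by move=> H; have [b [d [_ [_ Hb]]]] := H 1; case: (Hb 0 isT) => _; apply.
  + move=> A B hA hB H.
    have H' : rich (fun x => (0 < x /\ ~ A x) \/ (0 < x /\ ~ B x)).
      apply: rich_sub H => x [x0 nAB]; apply: NNPP => /not_or_and [h1 h2].
      by apply: nAB; split; apply: NNPP => ?; [apply: h1|apply: h2]; split.
    by case: (rich_union H').
  + move=> P Q PQ hP H; apply: hP; apply: rich_sub H => x [x0 nQ]; split=> // Px; exact: nQ (PQ _ Px).
Qed.

Lemma exists_rich_ultra : exists U : nfam, betaN U /\ forall A, U A -> rich A.
Proof.
have [G [GU sFG]] := ultraFilterLemma F0_proper.
exists G; split.
- split.
  + apply: sFG => H; have [b [d [b0 [_ Hb]]]] := H 1.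
    by case: (Hb 0 isT) => ? [].
  + move=> H; apply: (@filter_not_empty _ G); exact H.
  + move=> A B GA AB; apply: filterS GA; exact AB.
  + move=> A B; exact: filterI.
  + move=> A; exact: in_ultra_setVsetC.
- move=> A GA; apply: NNPP => nA.
  have GnA : G (~` A)%classic.
    apply: sFG => H; apply: nA; apply: rich_sub H => x [_ /NNPP] //.
  apply: (@filter_not_empty _ G); apply: filterS (filterI GA GnA).
  by move=> x [].
Qed.

Lemma u_up q A B : betaN q -> q A -> (forall x, A x -> B x) -> q B.
Proof. by move=> [_ _ h _ _]; apply: h. Qed.

Lemma u_int q A B : betaN q -> q A -> q B -> q (fun x => A x /\ B x).
Proof. by move=> [_ _ _ h _]; apply: h. Qed.

Lemma u_ne q A : betaN q -> q A -> exists x, A x.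
Proof.
move=> hq HA; apply: NNPP => H; case: hq => _ h2 h3 _ _; apply: h2.
by apply: (h3 _ (fun _ => False) HA) => x Ax; apply: H; exists x.
Qed.

Lemma u_fin q (P : nat -> nset) k : betaN q -> (forall i, i < k -> q (P i)) ->
  q (fun y => forall i, i < k -> P i y).
Proof.
move=> hq; elim: k => [|k IH] H.
  by case: hq => h1 _ h3 _ _; apply: (h3 _ _ h1).
have := u_int hq (IH (fun i ik => H i (ltnW ik))) (H k (ltnSn k)).
move=> H2; refine (u_up hq H2 _) => y [h1 h2] i; rewrite ltnS leq_eqVlt.
by case/orP => [/eqP ->|]; [|apply: h1].
Qed.

Lemma uadd_ultra p q : betaN p -> betaN q -> betaN (uadd p q).
Proof.
move=> [p1 p2 p3 p4 p5] [q1 q2 q3 q4 q5]; split.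
- refine (p3 _ _ p1 _) => x _; refine (q3 _ _ q1 _) => y y0.
  by rewrite /shiftset /Npos addn_gt0 y0 orbT.
- move=> H; apply: p2; refine (p3 _ _ H _) => x Hx; exact: q2 Hx.
- move=> A B HA AB; refine (p3 _ _ HA _) => x Hx; refine (q3 _ _ Hx _) => y; exact: AB.
- move=> A B HA HB; refine (p3 _ _ (p4 _ _ HA HB) _) => x [hA hB]; exact: q4 hA hB.
- move=> A; case: (p5 (fun x => q (shiftset x A))) => H; [by left|right].
  refine (p3 _ _ H _) => x nq; case: (q5 (shiftset x A)) => //.
Qed.

Definition Irich : nfam -> Prop := fun q => betaN q /\ forall A, q A -> rich A.

Lemma Irich_ideal : is_ideal Irich.
Proof.
split.
- by move=> q [].
- by have [U [hU hr]] := exists_rich_ultra; exists U.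
- move=> p q hp [hq hr]; split; first exact: uadd_ultra.
  move=> A HA k; have [x Hx] := u_ne hp HA.
  have [b [d [b0 [d0 H]]]] := hr _ Hx k.
  exists (x + b), d; split; first by rewrite addn_gt0 b0 orbT.
  by split=> // i ik; have := H i ik; rewrite /shiftset addnA.
- move=> p q [hp hr] hq; split; first exact: uadd_ultra.
  move=> A HA k; have [b [d [b0 [d0 H]]]] := hr _ HA k.
  have [y Hy] := u_ne hq (@u_fin q (fun i => shiftset (b + i*d) A) k hq H).
  exists (b + y), d; split; first by rewrite addn_gt0 b0.
  by split=> // i ik; have := Hy i ik; rewrite /shiftset addnAC.
Qed.

Lemma min_rich p : minimal_idempotent p -> forall A, p A -> rich A.
Proof. by move=> [_ hK]; have [_] := hK _ Irich_ideal. Qed.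

Definition star (p : nfam) (A : nset) : nset := fun x => A x /\ p (shiftset x A).

Lemma star_in p A : Defs.idempotent p -> p A -> p (star p A).
Proof.
move=> [hp hid] HA; have H2 : uadd p p A by rewrite hid.
exact: u_int hp HA H2.
Qed.

Lemma star_shift p A x : Defs.idempotent p -> star p A x -> p (shiftset x (star p A)).
Proof.
move=> hi [Ax Hx]; have H := star_in hi Hx; case: hi => hp _.
refine (u_up hp H _) => y [h1 h2]; split=> //.
by refine (u_up hp h2 _) => z; rewrite /shiftset addnA.
Qed.

Definition foldr_min_le z t : foldr minn z t <= z /\ forall x, x \in t -> foldr minn z t <= x.
Proof.
elim: t => [|y t [IH1 IH2]] /=; first by [].
split; first by apply: leq_trans (geq_minr _ _) IH1.
move=> x; rewrite inE => /orP [/eqP ->|xt]; first exact: geq_minl.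
by apply: leq_trans (geq_minr _ _) (IH2 x xt).
Qed.

Lemma foldr_min_in z t : foldr minn z t \in z :: t.
Proof.
elim: t => [|y t IH] /=; first by rewrite mem_head.
rewrite /minn; case: ifP => _; first by rewrite !inE eqxx orbT.
move: IH; rewrite !inE => /orP [->|->] //; by rewrite !orbT.
Qed.

Lemma minF_in F : F != [::] -> minF F \in F.
Proof.
case: F => // h t _; have := foldr_min_in h (h :: t).
by rewrite /minF /= inE => /orP [/eqP ->|]; [rewrite mem_head|].
Qed.

Lemma minF_le F x : x \in F -> minF F <= x.
Proof.
case: F => // h t xF; rewrite /minF /=.
by have [_ H] := foldr_min_le h (h :: t); apply: H.
Qed.

Fixpoint Eseq (p : nfam) (pick : nset -> nat -> nat * nat) (C : nat -> nset)
  (a : nat -> nat) (n : nat) : nset :=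
  match n with
  | 0 => fun _ => True
  | m.+1 => fun x => C m.+1 x /\ star p (Eseq p pick C a m) x /\
      forall i, i < a m ->
        star p (Eseq p pick C a m)
          ((pick (star p (Eseq p pick C a m)) (a m)).1 +
            i * (pick (star p (Eseq p pick C a m)) (a m)).2 + x)
  end.

Theorem theorem2p3 (p : nfam) (C : nat -> nset) (a : nat -> nat) :
  minimal_idempotent p ->
  (forall n, 0 < n -> p (C n)) ->
  (forall n, 0 < n -> 0 < a n) ->
  exists Y : nat -> nset,
    (forall n, 0 < n -> is_AP (Y n) (a n) /\ (forall x, Y n x -> C n x)) /\
    (forall F : seq nat, F != [::] -> uniq F -> all (fun n => 0 < n) F ->
       forall x, sumset Y F x -> C (minF F) x).
Proof.
move=> hmin hC _.
have hi : Defs.idempotent p by case: hmin.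
have hp : betaN p by case: hi.
have pick_ex : forall (E : nset) (k : nat), exists bd : nat * nat,
    p E -> 0 < bd.1 /\ 0 < bd.2 /\ forall i, i < k -> E (bd.1 + i * bd.2).
  move=> E k; case: (Classical_Prop.classic (p E)) => pE; last by exists (0,0).
  have [b [d [b0 [d0 H]]]] := min_rich hmin pE k.
  by exists (b,d).
pose pick E k := proj1_sig (ClassicalEpsilon.constructive_indefinite_description _ (pick_ex E k)).
have pickP : forall E k, p E -> 0 < (pick E k).1 /\ 0 < (pick E k).2 /\
    forall i, i < k -> E ((pick E k).1 + i * (pick E k).2).
  by move=> E k; exact: (proj2_sig (ClassicalEpsilon.constructive_indefinite_description _ (pick_ex E k))).
pose Aq n := star p (Eseq p pick C a n).
pose bd n := pick (Aq n) (a n).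
pose Y n := fun x => exists2 i, i < a n & x = (bd n).1 + i * (bd n).2.
have F1 : forall n, p (Aq n).
  elim=> [|n IH].
    apply: star_in => //; have Np : p Npos by case: hp.
    by refine (u_up hp Np _).
  apply: star_in => //=.
  apply: u_int => //; first exact: hC.
  apply: u_int => //.
  apply: (@u_fin p (fun i => shiftset ((bd n).1 + i * (bd n).2) (Aq n)) (a n)) => // i ia.
  have [_ [_ H]] := pickP (Aq n) (a n) IH.
  exact: star_shift (H i ia).
have F2 : forall n x, Y n x -> Aq n x.
  move=> n x [i ia ->]; have [_ [_ H]] := pickP (Aq n) (a n) (F1 n); exact: H.
have F3 : forall n x, 0 < n -> Aq n x -> C n x.
  by move=> [|n] x // _ [[]].
have F4 : forall n x, Aq n.+1 x -> Aq n x.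
  by move=> n x [[_ [h _]]].
have F4' : forall n m x, n <= m -> Aq m x -> Aq n x.
  move=> n m x; elim: m => [|m IH]; first by rewrite leqn0 => /eqP ->.
  rewrite leq_eqVlt => /orP [/eqP ->//|]; rewrite ltnS => nm H.
  exact: IH nm (F4 _ _ H).
have F5 : forall n x y, Aq n.+1 x -> Y n y -> Aq n (y + x).
  move=> n x y [[_ [_ h]] _] [i ia ->]; exact: h i ia.
have main : forall s F, size F <= s -> F != [::] -> uniq F ->
    forall f, (forall n, n \in F -> Y n (f n)) ->
    Aq (minF F) (\sum_(n <- F) f n).
  elim=> [|s IH] F; first by rewrite leqn0 => /nilP ->.
  move=> sz Fn uF f Hf.
  have mF := minF_in Fn.
  rewrite (perm_big _ (perm_to_rem mF)) big_cons.
  have [E|Rn] := eqVneq (rem (minF F) F) [::].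
    rewrite E big_nil; change (Aq (minF F) (f (minF F) + 0)); rewrite addn0.
    by apply: F2; apply: Hf.
  have uR : uniq (rem (minF F) F) := rem_uniq _ uF.
  have szR : size (rem (minF F) F) <= s.
    by move: sz; rewrite size_rem // -ltnS; case: (size F) => //.
  have HR := IH _ szR Rn uR f (fun n hn => Hf n (mem_rem hn)).
  have m'in := minF_in Rn.
  have lt : minF F < minF (rem (minF F) F).
    have := m'in; rewrite (mem_rem_uniq _ uF) inE => /andP [ne inF].
    by rewrite ltn_neqAle eq_sym ne minF_le.
  apply: F5; last exact: Hf.
  exact: F4' lt HR.
exists Y; split.
- move=> n n0; split.
  + have [b0 [d0 _]] := pickP (Aq n) (a n) (F1 n).
    by exists (bd n).1, (bd n).2.
  + move=> x Yx; exact: F3 n0 (F2 n x Yx).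
- move=> F Fn uF allpos x [f [Hf ->]].
  apply: F3; first exact: (allP allpos) _ (minF_in Fn).
  exact: main (size F) F (leqnn _) Fn uF f Hf.
Qed.
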